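(* Let $\mathcal{Q}\subseteq 2^E$ ($E$ finite) be homogeneous, i.e. all members of $\mathcal{Q}$ have the same cardinality. If $\mathcal{Q}$ is weakly Rayleigh then $\mathcal{Q}$ is the set of bases of a matroid on $E$.
   Context: For $\omega:2^E\to[0,\infty)$ not identically zero, $Z(\omega;\mathbf{y})=\sum_S\omega(S)\prod_{e\in S}y_e$; with subscripts denoting partial derivatives, $Z$ is Rayleigh if $Z_eZ_f-Z_{ef}Z\ge0$ for all distinct $e,f$ and all positive $\mathbf{y}$. $\mathcal{Q}$ is weakly Rayleigh if some $\omega\ge0$ with $\{S:\omega(S)>0\}=\mathcal{Q}$ has $Z(\omega;\mathbf{y})$ Rayleigh. *)

(* Defs.v *)
From mathcomp Require Import all_boot all_algebra.
From mathcomp Require Import Rstruct.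
From Stdlib Require Import Reals.
From mathcomp Require Import mpoly.

Set Implicit Arguments.
Unset Strict Implicit.
Unset Printing Implicit Defensive.

Import GRing.Theory Num.Theory.
Local Open Scope ring_scope.

(* The ground set E is a finite type; the variable y_e is 'X_(enum_rank e)
   in the polynomial ring R[y_e : e in E] = {mpoly R[#|E|]}. *)

Definition Zpoly (E : finType) (omega : {set E} -> R) : {mpoly R[#|E|]} :=
  \sum_(S : {set E}) omega S *: \prod_(e in S) 'X_(enum_rank e).

Definition Rayleigh (E : finType) (Z : {mpoly R[#|E|]}) : Prop :=
  forall (e f : E), e != f ->
  forall y : 'I_#|E| -> R, (forall i, 0 < y i) ->
    0 <= (Z^`M(enum_rank e)).@[y] * (Z^`M(enum_rank f)).@[y]
         - (Z^`M(enum_rank e)^`M(enum_rank f)).@[y] * Z.@[y].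

Definition weakly_Rayleigh (E : finType) (Q : {set {set E}}) : Prop :=
  exists omega : {set E} -> R,
    [/\ forall S, 0 <= omega S,
        exists S, omega S != 0,
        forall S, (0 < omega S) <-> (S \in Q)
      & Rayleigh (Zpoly omega)].

Definition homogeneous (E : finType) (Q : {set {set E}}) : Prop :=
  forall S T, S \in Q -> T \in Q -> #|S| = #|T|.

Definition matroid_bases (E : finType) (Q : {set {set E}}) : Prop :=
  Q != set0 /\
  forall B1 B2, B1 \in Q -> B2 \in Q ->
  forall x, x \in B1 :\: B2 ->
  exists2 y, y \in B2 :\: B1 & (y |: (B1 :\ x)) \in Q.

(* Main.v *)
Require Import Defs.
From mathcomp Require Import all_boot all_algebra.
From mathcomp Require Import Rstruct.
From Stdlib Require Import Reals Classical.
From mathcomp Require Import mpoly.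
From mathcomp Require Import ring lra.
Set Implicit Arguments.
Unset Strict Implicit.
Unset Printing Implicit Defensive.
Import order.Order.TTheory GRing.Theory Num.Theory.
Local Open Scope ring_scope.

Lemma mderivXU_ne n (i j : 'I_n) : i != j -> ('X_j : {mpoly R[n]})^`M(i) = 0.
Proof. by move=> ne; rewrite mderivX mnm1E eq_sym (negbTE ne) scale0r. Qed.

Lemma mderivXU_eq n (i : 'I_n) : ('X_i : {mpoly R[n]})^`M(i) = 1.
Proof.
rewrite mderivX mnm1E eqxx scale1r.
have -> : (U_(i) - U_(i))%MM = 0%MM by apply/mnmP => j; rewrite mnmBE mnm0E subnn.
by rewrite mpolyX0.
Qed.

Lemma dprod0 (E : finType) (S : {set E}) i :
  (forall g, g \in S -> enum_rank g != i) ->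
  (\prod_(g in S) ('X_(enum_rank g) : {mpoly R[#|E|]}))^`M(i) = 0.
Proof.
move=> H; apply: (big_ind (fun p : {mpoly R[#|E|]} => p^`M(i) = 0)).
- by rewrite -mpolyC1 mderivC.
- by move=> p q hp hq; rewrite mderivM hp hq mul0r mulr0 addr0.
- by move=> g /H; rewrite eq_sym => ne; exact: mderivXU_ne.
Qed.

Lemma dprod (E : finType) (S : {set E}) e :
  (\prod_(g in S) ('X_(enum_rank g) : {mpoly R[#|E|]}))^`M(enum_rank e) =
  if e \in S then \prod_(g in S :\ e) 'X_(enum_rank g) else 0.
Proof.
case: ifP => He.
  rewrite (bigD1 e) //=.
  have -> : \prod_(g in S | g != e) ('X_(enum_rank g) : {mpoly R[#|E|]}) =
     \prod_(g in S :\ e) 'X_(enum_rank g).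
    by apply: eq_bigl => g; rewrite in_setD1 andbC.
  rewrite mderivM mderivXU_eq mul1r dprod0 ?mulr0 ?addr0 //.
  by move=> g; rewrite in_setD1 => /andP[ne _]; rewrite (inj_eq enum_rank_inj).
apply: dprod0 => g gS; rewrite (inj_eq enum_rank_inj).
by apply: contraTneq gS => ->; rewrite He.
Qed.

Lemma eval_prod (E : finType) (S : {set E}) (y : 'I_#|E| -> R) :
  (\prod_(g in S) ('X_(enum_rank g) : {mpoly R[#|E|]})).@[y] =
  \prod_(g in S) y (enum_rank g).
Proof.
rewrite (big_morph _ (mevalM y) (meval1 y)); apply: eq_bigr => g _.
by rewrite mevalXU.
Qed.

Lemma Zpoly_eval (E : finType) (omega : {set E} -> R) y :
  (Zpoly omega).@[y] = \sum_S omega S * \prod_(g in S) y (enum_rank g).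
Proof.
rewrite /Zpoly (big_morph _ (mevalD y) (meval0 y)); apply: eq_bigr => S _.
by rewrite mevalZ eval_prod.
Qed.

Lemma Zpoly_d1 (E : finType) (omega : {set E} -> R) e :
  (Zpoly omega)^`M(enum_rank e) = \sum_S omega S *:
     (if e \in S then \prod_(g in S :\ e) 'X_(enum_rank g) else 0).
Proof.
rewrite /Zpoly (big_morph _ (@mderivD _ _ (enum_rank e)) (@mderiv0 _ _ (enum_rank e))); apply: eq_bigr => S _.
by rewrite mderivZ dprod.
Qed.

Lemma Zpoly_d2 (E : finType) (omega : {set E} -> R) e f :
  (Zpoly omega)^`M(enum_rank e)^`M(enum_rank f) = \sum_S omega S *:
     (if e \in S then if f \in S :\ e then
        \prod_(g in S :\ e :\ f) 'X_(enum_rank g) else 0 else 0).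
Proof.
rewrite Zpoly_d1 (big_morph _ (@mderivD _ _ (enum_rank f)) (@mderiv0 _ _ (enum_rank f))); apply: eq_bigr => S _.
by rewrite mderivZ; case: ifP => _; rewrite ?mderiv0 // dprod.
Qed.

Lemma Pdel (E : finType) (S : {set E}) (y : 'I_#|E| -> R) e : e \in S ->
  y (enum_rank e) * \prod_(g in S :\ e) y (enum_rank g) =
  \prod_(g in S) y (enum_rank g).
Proof.
move=> He; rewrite [RHS](bigD1 e) //=; congr (_ * _).
by apply: eq_bigl => g; rewrite in_setD1 andbC.
Qed.

Lemma card_ind (E : finType) (S A : {set E}) :
  \big[addn/0%N]_(g in S) (g \in A : nat) = #|S :&: A|.
Proof.
rewrite -sum1_card [RHS]big_mkcond [LHS]big_mkcond /=; apply: eq_bigr => g _.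
by rewrite in_setI; case: (g \in S); case: (g \in A).
Qed.

Lemma eval_sumZ (E : finType) (omega : {set E} -> R)
  (p : {set E} -> {mpoly R[#|E|]}) y :
  (\sum_S omega S *: p S).@[y] = \sum_S omega S * (p S).@[y].
Proof.
rewrite (big_morph _ (mevalD y) (meval0 y)); apply: eq_bigr => S _.
by rewrite mevalZ.
Qed.

Lemma analytic (E : finType) (Q : {set {set E}}) (omega : {set E} -> R)
  (B1 B2 : {set E}) (x x' : E) :
  (forall S, 0 <= omega S) -> (forall S, 0 < omega S <-> S \in Q) ->
  Rayleigh (Zpoly omega) -> homogeneous Q -> B1 \in Q -> B2 \in Q ->
  x \in B1 -> x \notin B2 -> x' \in B1 -> x' \notin B2 -> x' != x ->
  (forall S, S \in Q -> S \subset B1 :|: B2 -> B1 :&: B2 \subset S ->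
     x \notin S -> S = B2) -> False.
Proof.
move=> om0 omQ Ray hom B1Q B2Q xB1 xB2 x'B1 x'B2 x'x fact.
set U := B1 :|: B2. set C := B1 :&: B2.
pose w (g : E) : nat := addn (g \in U) (g \in C).
pose ex (S : {set E}) : nat := \big[addn/0%N]_(g in S) w g.
have exE S : ex S = addn #|S :&: U| #|S :&: C|.
  by rewrite /ex /w big_split /= !card_ind.
have homB S : S \in Q -> #|S| = #|B1| by move=> SQ; exact: hom.
have exB1 : ex B1 = addn #|B1| #|C|.
  rewrite exE; congr addn; first by rewrite (setIidPl _) // subsetUl.
  by rewrite (setIidPr _) // subsetIl.
have exB2 : ex B2 = ex B1.
  rewrite exB1 exE -(homB _ B2Q); congr addn.
    by rewrite (setIidPl _) // subsetUr.
  by rewrite (setIidPr _) // subsetIr.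
set M := ex B1.
have M0 : leq 1 M.
  rewrite /M exB1; apply: leq_trans (leq_addr _ _).
  by apply/card_gt0P; exists x.
have exle S : S \in Q -> leq (ex S) M.
  move=> SQ; rewrite exE /M exB1 -(homB _ SQ).
  have h1 := subset_leq_card (subsetIl S U).
  have h2 := subset_leq_card (subsetIr S C).
  exact: leq_add.
have exlt S : S \in Q -> x' \in S -> x \notin S -> leq (ex S).+1 M.
  move=> SQ x'S xS; rewrite exE /M exB1 -(homB _ SQ).
  have h1 := subset_leq_card (subsetIl S U).
  have h2 := subset_leq_card (subsetIr S C).
  have [SU|SU] := boolP (S \subset U); last first.
    have : (S :&: U) \proper S.
      by rewrite properEneq subsetIl andbT; apply: contra SU => /eqP/setIidPl.
    move/proper_card => h3; have := leq_add h3 h2; rewrite addSn; exact.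
  have [CS|CS] := boolP (C \subset S).
    by have eB := fact S SQ SU CS xS; rewrite eB in x'S; rewrite x'S in x'B2.
  have : (S :&: C) \proper C.
    by rewrite properEneq subsetIr andbT; apply: contra CS => /eqP/setIidPr.
  move/proper_card => h3; have := leq_add h1 h3; rewrite addnS; exact.
have w1 : 0 < omega B1 by apply/omQ.
have w2 : 0 < omega B2 by apply/omQ.
pose W := \sum_S omega S.
have W0 : 0 <= W by apply: sumr_ge0 => S _.
pose p := omega B1 * omega B2.
have p0 : 0 < p by apply: mulr_gt0.
pose t : R := W ^+ 2 / p + 1.
have q0 : 0 <= W ^+ 2 / p by apply: divr_ge0; [apply: sqr_ge0 | apply: ltW].
have t1 : 1 <= t by rewrite /t lerDr.
have t0 : 0 < t by apply: lt_le_trans t1.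
have teq : p * t = W ^+ 2 + p.
  by rewrite /t mulrDr mulr1 [p * _]mulrC divfK // gt_eqF.
pose y : 'I_#|E| -> R := fun i => t ^+ w (enum_val i).
have ypos i : 0 < y i by apply: exprn_gt0.
have yr g : y (enum_rank g) = t ^+ w g by rewrite /y enum_rankK.
pose P (S : {set E}) : R := \prod_(g in S) y (enum_rank g).
have PE S : P S = t ^+ ex S.
  by rewrite /P (eq_bigr _ (fun g _ => yr g)) prodrXr.
have Pge S : 0 <= P S by rewrite PE exprn_ge0 // ltW.
have xx' : x != x' by rewrite eq_sym.
have Rx := Ray x x' xx' y ypos.
pose A := \sum_S omega S * (if x \in S then P S else 0).
pose Bf := \sum_S omega S * (if x' \in S then P S else 0).
pose Aef := \sum_S omega S * (if (x \in S) && (x' \in S) then P S else 0).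
pose Zs := \sum_S omega S * P S.
have Ze : ((Zpoly omega)^`M(enum_rank x)).@[y] * y (enum_rank x) = A.
  rewrite Zpoly_d1 eval_sumZ mulr_suml; apply: eq_bigr => S _.
  case: ifP => h; last by rewrite meval0 mulr0 mul0r.
  by rewrite eval_prod -mulrA [_ * y _]mulrC Pdel.
have Zf : ((Zpoly omega)^`M(enum_rank x')).@[y] * y (enum_rank x') = Bf.
  rewrite Zpoly_d1 eval_sumZ mulr_suml; apply: eq_bigr => S _.
  case: ifP => h; last by rewrite meval0 mulr0 mul0r.
  by rewrite eval_prod -mulrA [_ * y _]mulrC Pdel.
have Zef : ((Zpoly omega)^`M(enum_rank x)^`M(enum_rank x')).@[y] *
     (y (enum_rank x) * y (enum_rank x')) = Aef.
  rewrite Zpoly_d2 eval_sumZ mulr_suml; apply: eq_bigr => S _.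
  case: (boolP (x \in S)) => hx /=; last by rewrite meval0 mulr0 mul0r.
  rewrite in_setD1 x'x /=.
  case: (boolP (x' \in S)) => hx' /=; last by rewrite meval0 mulr0 mul0r.
  rewrite eval_prod -mulrA; congr (_ * _).
  by rewrite mulrC -mulrA Pdel ?in_setD1 ?x'x // Pdel.
have Zv : (Zpoly omega).@[y] = Zs by rewrite Zpoly_eval.
have key : 0 <= A * Bf - Aef * Zs.
  rewrite -Ze -Zf -Zef -Zv.
  set a := _.@[y]; set b := _.@[y]; set c := _.@[y]; set d := _.@[y].
  set yx := y _; set yx' := y _.
  have -> : a * yx * (b * yx') - c * (yx * yx') * d =
      (yx * yx') * (a * b - c * d) by ring.
  apply: mulr_ge0; first by apply: mulr_ge0; apply: ltW; apply: ypos.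
  exact: Rx.
pose Bf' := \sum_S omega S * (if (x' \in S) && (x \notin S) then P S else 0).
pose Zne := \sum_S omega S * (if x \notin S then P S else 0).
have Bsplit : Bf = Aef + Bf'.
  rewrite /Bf /Aef /Bf' -big_split /=; apply: eq_bigr => S _.
  by case: (x \in S); case: (x' \in S); rewrite /= ?mulr0 ?addr0 ?add0r.
have Zsplit : Zs = A + Zne.
  rewrite /Zs /A /Zne -big_split /=; apply: eq_bigr => S _.
  by case: (x \in S); rewrite /= ?mulr0 ?addr0 ?add0r.
have G : A * Bf - Aef * Zs = A * Bf' - Aef * Zne.
  by rewrite Bsplit Zsplit; ring.
have termle S (k : nat) (b : bool) : (b -> S \in Q -> leq (ex S) k) ->
    omega S * (if b then P S else 0) <= omega S * t ^+ k.
  move=> H; case: b H => H; last first.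
    by rewrite mulr0; apply: mulr_ge0 => //; apply: exprn_ge0; apply: ltW.
  have := om0 S; rewrite le_eqVlt => /orP[/eqP<-|pos]; first by rewrite !mul0r.
  apply: ler_wpM2l => //; rewrite PE; apply: ler_weXn2l => //.
  by apply: H => //; apply/omQ.
have term0 S (b : bool) : 0 <= omega S * (if b then P S else 0).
  by apply: mulr_ge0 => //; case: b.
pose u := t ^+ M.-1.
have u0 : 0 < u by apply: exprn_gt0.
have tM : t ^+ M = t * u by rewrite /u -exprS prednK.
have Ale : A <= W * (t * u).
  rewrite -tM /W mulr_suml; apply: ler_sum => S _; apply: termle => _ SQ.
  exact: exle.
have Bfle : Bf' <= W * u.
  rewrite /W mulr_suml; apply: ler_sum => S _; apply: termle => /andP[h1 h2] SQ.
  by have := exlt S SQ h1 h2; rewrite -{1}(prednK M0) ltnS.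
have A0 : 0 <= A by apply: sumr_ge0 => S _.
have Bf0 : 0 <= Bf' by apply: sumr_ge0 => S _.
have Aefge : omega B1 * (t * u) <= Aef.
  rewrite /Aef (bigD1 B1) //= xB1 x'B1 /= PE -tM lerDl.
  by apply: sumr_ge0 => S _.
have Znege : omega B2 * (t * u) <= Zne.
  rewrite /Zne (bigD1 B2) //= xB2 /= PE exB2 -tM lerDl.
  by apply: sumr_ge0 => S _.
have h1 : A * Bf' <= (W * (t * u)) * (W * u) by apply: ler_pM.
have h2 : (omega B1 * (t * u)) * (omega B2 * (t * u)) <= Aef * Zne.
  by apply: ler_pM => //; apply: mulr_ge0; apply: ltW => //; apply: mulr_gt0.
have h3 : (W * (t * u)) * (W * u) - (omega B1 * (t * u)) * (omega B2 * (t * u))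
    = - (t * u * u * p).
  have -> : (W * (t * u)) * (W * u) - (omega B1 * (t * u)) * (omega B2 * (t * u))
    = t * u * u * (W ^+ 2 - p * t) by rewrite /p; ring.
  by rewrite teq; ring.
have h4 : 0 < t * u * u * p by do 3 apply: mulr_gt0 => //.
move: key; rewrite G => key.
have : 0 <= - (t * u * u * p) by rewrite -h3; lra.
lra.
Qed.

Lemma exch (E : finType) (Q : {set {set E}}) (omega : {set E} -> R) :
  (forall S, 0 <= omega S) -> (forall S, 0 < omega S <-> S \in Q) ->
  Rayleigh (Zpoly omega) -> homogeneous Q ->
  forall n (B1 B2 : {set E}), leq #|B1 :\: B2| n -> B1 \in Q -> B2 \in Q ->
  forall x, x \in B1 :\: B2 ->
  exists2 y, y \in B2 :\: B1 & (y |: (B1 :\ x)) \in Q.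
Proof.
move=> om0 omQ Ray hom; elim=> [|n IH] B1 B2 hn B1Q B2Q x hx.
  by move: hn; rewrite leqn0 cards_eq0 => /eqP e; rewrite e inE in hx.
apply: NNPP => H.
move: hx; rewrite inE => /andP[xB2 xB1].
have hom12 : #|B1| = #|B2| := hom _ _ B1Q B2Q.
have fact S : S \in Q -> S \subset B1 :|: B2 -> B1 :&: B2 \subset S ->
    x \notin S -> S = B2.
  move=> SQ SU CS xS; apply: NNPP => neq.
  have [z zS zB2] : exists2 z, z \in S & z \notin B2.
    apply: NNPP => nz.
    have sub : S \subset B2.
      apply/subsetP => z zS; apply: NNPP => zn; apply: nz; exists z => //.
      exact/negP.
    apply: neq; apply/eqP; rewrite eqEcard sub /= (hom _ _ B2Q SQ).
    exact: leqnn.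
  have zB1 : z \in B1.
    by move/subsetP: SU => /(_ z zS); rewrite inE (negbTE zB2) orbF.
  have pr : B1 :\: S \proper B1 :\: B2.
    apply/properP; split.
      apply/subsetP => g; rewrite !inE => /andP[gS gB1]; rewrite gB1 andbT.
      apply: contra gS => gB2; move/subsetP: CS; apply; by rewrite inE gB1 gB2.
    by exists z; rewrite inE ?zB2 ?zB1 ?zS.
  have lt := proper_card pr.
  have hn' : leq #|B1 :\: S| n by rewrite -ltnS; exact: leq_trans lt hn.
  have xin : x \in B1 :\: S by rewrite inE xS xB1.
  have [y yin yQ] := IH B1 S hn' B1Q SQ x xin.
  apply: H; exists y => //.
  move: yin; rewrite !inE => /andP[yB1 yS]; rewrite yB1 /=.
  by move/subsetP: SU => /(_ y yS); rewrite inE (negbTE yB1).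
have [x' x'in x'x] : exists2 x', x' \in B1 :\: B2 & x' != x.
  apply: NNPP => nx; apply: H.
  have D1 g : g \in B1 -> g \notin B2 -> g = x.
    move=> g1 g2; apply: NNPP => ne; apply: nx; exists g.
      by rewrite inE g1 g2.
    exact/eqP.
  have [y yin] : exists y, y \in B2 :\: B1.
    apply: NNPP => ny.
    have sub : B2 \subset B1.
      apply/subsetP => g gB2; apply: NNPP => gn; apply: ny; exists g.
      by rewrite inE gB2 andbT; apply/negP.
    have e : B2 = B1.
      by apply/eqP; rewrite eqEcard sub /= hom12 leqnn.
    by rewrite e xB1 in xB2.
  exists y => //.
  move: (yin); rewrite inE => /andP[yB1 yB2].
  have -> : y |: (B1 :\ x) = B2 => //.
  apply/eqP; rewrite eqEcard; apply/andP; split.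
    apply/subsetP => g; rewrite !inE => /orP[/eqP->|/andP[gx gB1]] //.
    apply: NNPP => /negP gB2; by rewrite (D1 g gB1 gB2) eqxx in gx.
  have yn : y \notin B1 :\ x by rewrite in_setD1 (negbTE yB1) andbF.
  by rewrite cardsU1 yn -hom12 (cardsD1 x B1) xB1.
move: x'in; rewrite inE => /andP[x'B2 x'B1].
exfalso; exact: (analytic om0 omQ Ray hom B1Q B2Q xB1 xB2 x'B1 x'B2 x'x fact).
Qed.

Theorem corollary4p9 (E : finType) (Q : {set {set E}}) :
  homogeneous Q -> weakly_Rayleigh Q -> matroid_bases Q.
Proof.
move=> hom [omega [om0 [S0 hS0] omQ Ray]].
split.
  apply/set0Pn; exists S0; apply/omQ; by rewrite lt0r hS0 om0.
move=> B1 B2 h1 h2; exact: (exch om0 omQ Ray hom (leqnn _) h1 h2).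
Qed.
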